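(* Let $q=3^k$ for a positive integer $k$ and $n$ a positive integer. Let $S$ be a sequence of elements of $\mathbb{F}_q^n$ such that every subsequence $(g_1',g_2',g_3')$ of length $3$ satisfies $g_1'g_2'+g_2'g_3'+g_3'g_1'\neq 0$. Let $P:\mathbb{F}_q^n\times\mathbb{F}_q^n\times\mathbb{F}_q^n\to\mathbb{F}_q$ be $P(x,y,z)=\prod_{i=1}^{n} (1-(x_iy_i+y_iz_i+z_ix_i)^{q-1})$. Then $$|S|\leq 2(n+1)\,srk(P),$$ where the slice rank is taken for $P$ on the full domain $\mathbb{F}_q^n\times\mathbb{F}_q^n\times\mathbb{F}_q^n$.
   Context: Operations in $\mathbb{F}_q^n$ are coordinatewise. A sequence is a finite list with repetitions allowed; a subsequence of length $3$ is obtained by choosing $3$ distinct positions; $|S|$ is the length of $S$. A function $T:A^3\to\mathbb{F}$ (for a finite set $A$ and field $\mathbb{F}$) is a slice if it can be written as $T(x_1,x_2,x_3)=T_1(x_i)T_2(x_{i'},x_{i''})$ where $\{i,i',i''\}=\{1,2,3\}$, $T_1:A\to\mathbb{F}$, $T_2:A^2\to\mathbb{F}$. The slice rank $srk(T)$ is the smallest number $r$ such that $T$ is a linear combination of $r$ slices. *)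

(* Defs.v *)
From mathcomp Require Import all_boot all_algebra all_field.
From mathcomp Require Import boolp.
Set Implicit Arguments. Unset Strict Implicit. Unset Printing Implicit Defensive.
Import GRing.Theory.
Local Open Scope ring_scope.

Definition is_slice (A : finType) (F : fieldType) (S : A -> A -> A -> F) : Prop :=
  exists (T1 : A -> F) (T2 : A -> A -> F),
    (forall x1 x2 x3, S x1 x2 x3 = T1 x1 * T2 x2 x3) \/
    (forall x1 x2 x3, S x1 x2 x3 = T1 x2 * T2 x1 x3) \/
    (forall x1 x2 x3, S x1 x2 x3 = T1 x3 * T2 x1 x2).

Definition slice_decomp (A : finType) (F : fieldType) (T : A -> A -> A -> F)
  (r : nat) : Prop :=
  exists (c : 'I_r -> F) (s : 'I_r -> A -> A -> A -> F),
    (forall j, is_slice (s j)) /\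
    (forall x1 x2 x3, T x1 x2 x3 = \sum_(j < r) c j * s j x1 x2 x3).

Lemma slice_decomp_exists (A : finType) (F : fieldType) (T : A -> A -> A -> F) :
  exists r, `[< slice_decomp T r >].
Proof.
exists #|A|; apply/asboolP.
exists (fun _ => 1), (fun j x1 x2 x3 => (x1 == enum_val j)%:R * T (enum_val j) x2 x3).
split.
  move=> j; exists (fun x => (x == enum_val j)%:R), (T (enum_val j)); by left.
move=> x1 x2 x3.
rewrite -(big_enum_val (fun a => 1 * ((x1 == a)%:R * T a x2 x3))) /=.
rewrite (bigD1 x1) //= eqxx mul1r mul1r big1 ?addr0 //.
by move=> a /negbTE; rewrite eq_sym => ->; rewrite !mul0r mulr0.
Qed.

Definition srk (A : finType) (F : fieldType) (T : A -> A -> A -> F) : nat :=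
  ex_minn (slice_decomp_exists T).

Definition Pfun (F : finFieldType) (n q : nat) (x y z : 'rV[F]_n) : F :=
  \prod_(i < n) (1 - (x 0 i * y 0 i + y 0 i * z 0 i + z 0 i * x 0 i) ^+ (q - 1)%N).

Definition sym2 (F : finFieldType) (n : nat) (a b c : 'rV[F]_n) : 'rV[F]_n :=
  \row_i (a 0 i * b 0 i + b 0 i * c 0 i + c 0 i * a 0 i).

(* Main.v *)
Require Import Defs.
From mathcomp Require Import all_boot all_algebra all_field.
From mathcomp Require Import boolp zify ring.
Set Implicit Arguments. Unset Strict Implicit. Unset Printing Implicit Defensive.
Import GRing.Theory.
Local Open Scope ring_scope.

Definition supp (F : fieldType) m (v : 'rV[F]_m) : {set 'I_m} := [set i | v 0 i != 0].

Lemma rank_sum_le (F : fieldType) (I : finType) (P : {set I}) m n (N : I -> 'M[F]_(m, n)) :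
  (forall j, j \in P -> \rank (N j) <= 1)%N -> (\rank (\sum_(j in P) N j)%R <= #|P|)%N.
Proof.
move=> H; rewrite -sum1_card.
apply: (big_ind2 (fun (A : 'M[F]_(m, n)) (k : nat) => \rank A <= k)%N).
- by rewrite mxrank0.
- by move=> A1 k1 A2 k2 h1 h2; apply: leq_trans (mxrank_add _ _) (leq_add h1 h2).
- exact: H.
Qed.

Lemma rank_diag_le (F : fieldType) m (v : 'rV[F]_m) : (\rank (diag_mx v) <= #|supp v|)%N.
Proof.
have -> : diag_mx v = (\sum_(i | i \in supp v) v 0 i *: delta_mx i i)%R.
  apply/matrixP => a b; rewrite !mxE summxE.
  under eq_bigr => i _ do rewrite !mxE.
  case: (eqVneq a b) => [<-|nab].
    case: (boolP (a \in supp v)) => ha.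
      rewrite (bigD1 a) //= !eqxx mulr1 big1 ?addr0 //.
      by move=> i /andP [_ ni]; rewrite andbb eq_sym (negbTE ni) mulr0.
    rewrite big1; first by move: ha; rewrite inE negbK => /eqP ->; rewrite mul0rn.
    move=> i hi; rewrite andbb; case: eqP => [e|_]; last by rewrite mulr0.
    by move: ha; rewrite e hi.
  rewrite /= big1 // => i _.
  case: eqP => [e|_]; last by rewrite mulr0.
  by rewrite -e eq_sym (negbTE nab) mulr0.
apply: rank_sum_le => i _; apply: leq_trans (mxrank_scale _ _ ) _; by rewrite mxrank_delta.
Qed.

Lemma rank_diag_ge (F : fieldType) m (v : 'rV[F]_m) : (#|supp v| <= \rank (diag_mx v))%N.
Proof.
pose w : 'rV[F]_m := \row_i (if v 0 i == 0 then 1 else 0).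
have hsw : supp w = ~: supp v.
  by apply/setP => i; rewrite !inE mxE; case: (v 0 i == 0); rewrite ?oner_eq0 ?eqxx.
have hU : diag_mx (v + w) \in unitmx.
  rewrite unitmxE det_diag unitfE; apply/prodf_neq0 => i _.
  rewrite !mxE; case: (eqVneq (v 0 i) 0) => [->|nz]; by rewrite ?add0r ?oner_eq0 ?addr0.
have hD : diag_mx (v + w) = (diag_mx v + diag_mx w)%R.
  by apply/matrixP => a b; rewrite !mxE mulrnDl.
have := mxrank_add (diag_mx v) (diag_mx w); rewrite -hD mxrank_unit //.
have := rank_diag_le w; rewrite hsw cardsCs setCK card_ord.
have : (#|supp v| <= m)%N by rewrite -[X in (_ <= X)%N]card_ord max_card.
lia.
Qed.

Lemma supp_big (F : finFieldType) p m (K : 'M[F]_(p, m)) :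
  exists2 h : 'rV[F]_m, (h <= K)%MS & (\rank K <= #|supp h|)%N.
Proof.
case: (@arg_maxnP _ (0 : 'rV[F]_m) (fun h => (h <= K)%MS) (fun h => #|supp h|) (sub0mx _ _))
  => h hK hmax.
exists h => //; rewrite leqNgt; apply/negP => lt.
pose d : 'rV[F]_m := \row_i ((i \in supp h)%:R).
have hsd : supp d = supp h.
  apply/setP => i; rewrite [in LHS]inE mxE; case: (boolP (i \in supp h)) => _; by rewrite ?oner_eq0 ?eqxx.
pose Z := kermx (diag_mx d).
have rZ : (m - #|supp h| <= \rank Z)%N.
  by rewrite /Z mxrank_ker leq_sub2l // -hsd rank_diag_le.
have := mxrank_sum_cap K Z; have := rank_leq_col (K + Z)%MS => h1 h2.
have nz : (K :&: Z)%MS != 0 by rewrite -mxrank_eq0; lia.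
have [i0 hi0] : exists i0, row i0 (K :&: Z)%MS != 0.
  apply/existsP; apply: contraNT nz => /existsPn hn; apply/eqP/row_matrixP => i.
  by move: (hn i); rewrite negbK row0 => /eqP.
set u := row i0 _ in hi0.
have uK : (u <= K)%MS by apply: submx_trans (row_sub _ _) (capmxSl _ _).
have uZ : (u <= Z)%MS by apply: submx_trans (row_sub _ _) (capmxSr _ _).
have u0 : forall j, j \in supp h -> u 0 j = 0.
  move=> j hj; move: uZ; rewrite sub_kermx mul_mx_diag => /eqP/matrixP/(_ 0 j).
  by rewrite !mxE hj mulr1.
have [j hj] : exists j, u 0 j != 0.
  apply/existsP; apply: contraNT hi0 => /existsPn hn; apply/eqP/rowP => j.
  by move: (hn j); rewrite negbK => /eqP ->; rewrite mxE.
have : supp h \proper supp (h + u).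
  apply/properP; split.
    by apply/subsetP => i hi; rewrite !inE mxE u0 // addr0; rewrite inE in hi.
  exists j; first by rewrite inE mxE; case: (boolP (j \in supp h)) => [/u0 e|]; [move: hj; rewrite e eqxx|rewrite inE negbK => /eqP ->; rewrite add0r].
  by apply: contra hj => /u0 ->.
move/proper_card; have := hmax (h + u) (addmx_sub hK uK); lia.
Qed.

Lemma key (X : finType) (F : finFieldType) (T : X -> X -> X -> F) (B : {set X}) r :
  slice_decomp T r ->
  (forall x y z, x \in B -> y \in B -> z \in B -> (T x y z != 0) = ((x == y) && (y == z))) ->
  (#|B| <= r)%N.
Proof.
move=> [c [s [Hs HT]]] HB.
pose Q (j : 'I_r) (p : (X -> F) * (X -> X -> F)) :=
   (forall x1 x2 x3, s j x1 x2 x3 = p.1 x1 * p.2 x2 x3) \/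
   (forall x1 x2 x3, s j x1 x2 x3 = p.1 x2 * p.2 x1 x3) \/
   (forall x1 x2 x3, s j x1 x2 x3 = p.1 x3 * p.2 x1 x2).
have [f Hf] := @choice _ _ Q (fun j => match Hs j with ex_intro T1 (ex_intro T2 H) => ex_intro _ (T1, T2) H end).
pose J1 := [set j : 'I_r | `[< forall x1 x2 x3, s j x1 x2 x3 = (f j).1 x1 * (f j).2 x2 x3 >]].
pose b (i : 'I_#|B|) : X := enum_val i.
have bB i : b i \in B := enum_valP i.
have binj : injective b := @enum_val_inj _ _.
pose dv : 'rV[F]_r := \row_j ((j \in J1)%:R).
have hsd : supp dv = J1.
  apply/setP => i; rewrite [in LHS]inE mxE; case: (boolP (i \in J1)) => _; by rewrite ?oner_eq0 ?eqxx.
pose W : 'M[F]_(r, #|B|) := \matrix_(j, i) (f j).1 (b i).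
pose A := diag_mx dv *m W.
have rA : (\rank A <= #|J1|)%N by rewrite -hsd; apply: leq_trans (mxrankM_maxl _ _) (rank_diag_le dv).
have [h hK hs] := supp_big (kermx A^T).
rewrite mxrank_ker mxrank_tr in hs.
have hA : forall j, j \in J1 -> \sum_i h 0 i * (f j).1 (b i) = 0.
  move=> j hj; move: hK; rewrite sub_kermx /A mul_diag_mx => /eqP/matrixP/(_ 0 j).
  rewrite !mxE => E; rewrite -[RHS]E; apply: eq_bigr => i _; by rewrite !mxE hj mul1r.
pose M : 'M[F]_#|B| := \matrix_(i, l) \sum_k h 0 k * T (b k) (b i) (b l).
pose e : 'rV[F]_#|B| := \row_i (h 0 i * T (b i) (b i) (b i)).
have Tnz i : T (b i) (b i) (b i) != 0 by rewrite HB ?eqxx.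
have hM : M = diag_mx e.
  apply/matrixP => i l; rewrite !mxE (bigD1 i) //= big1 ?addr0; last first.
    move=> k hk; apply/eqP; rewrite mulf_eq0; apply/orP; right.
    by rewrite -[_ == 0]negbK HB // (inj_eq binj) (negbTE hk).
  case: (eqVneq i l) => [<-|nil]; first by rewrite mulr1n.
  rewrite mulr0n; apply/eqP; rewrite mulf_eq0; apply/orP; right.
  by rewrite -[_ == 0]negbK HB // eqxx (inj_eq binj) (negbTE nil).
have hse : supp e = supp h.
  by apply/setP => i; rewrite !inE mxE mulf_eq0 negb_or (Tnz i) andbT.
have rM1 : (#|supp h| <= \rank M)%N by rewrite hM -hse rank_diag_ge.
pose N j : 'M[F]_#|B| := \matrix_(i, l) (c j * \sum_k h 0 k * s j (b k) (b i) (b l)).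
have hMN : M = (\sum_(j in ~: J1) N j)%R.
  apply/matrixP => i l; rewrite !mxE summxE.
  under eq_bigr => k _ do rewrite HT big_distrr /=.
  rewrite exchange_big /= (bigID (fun j => j \in J1)) /= big1 ?add0r.
    apply: eq_big => [j|j hj]; first by rewrite in_setC.
    rewrite mxE big_distrr /=; apply: eq_bigr => k _; ring.
  move=> j hj; have := hj; rewrite inE => /asboolP Hj.
  under eq_bigr => k _ do rewrite Hj.
  rewrite (eq_bigr (fun k => (c j * (f j).2 (b i) (b l)) * (h 0 k * (f j).1 (b k)))).
    by rewrite -big_distrr /= hA // mulr0.
  by move=> k _; ring.
have rM2 : (\rank M <= #|~: J1|)%N.
  rewrite hMN; apply: rank_sum_le => j; rewrite inE => hj.
  case: (Hf j) => [H1|[H2|H3]].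
  - by move: hj; rewrite inE (asboolT H1).
  - have -> : N j = (\col_i (f j).1 (b i)) *m (\row_l (c j * \sum_k h 0 k * (f j).2 (b k) (b l))).
      apply/matrixP => i l; rewrite !mxE big_ord1 !mxE !big_distrr /=.
      by apply: eq_bigr => k _; rewrite H2; ring.
    exact: leq_trans (mxrankM_maxl _ _) (rank_leq_col _).
  - have -> : N j = (\col_i (c j * \sum_k h 0 k * (f j).2 (b k) (b i))) *m (\row_l (f j).1 (b l)).
      apply/matrixP => i l; rewrite !mxE big_ord1 !mxE big_distrr /= big_distrr /= mulr_suml.
      by apply: eq_bigr => k _; rewrite H3; ring.
    exact: leq_trans (mxrankM_maxl _ _) (rank_leq_col _).
have := cardsC J1; rewrite card_ord.
lia.
Qed.

Section Comb.
Variables (F : finFieldType) (n : nat).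
Hypothesis char3 : (3%:R : F) = 0.

Lemma sym2C12 (a b c : 'rV[F]_n) : sym2 a b c = sym2 b a c.
Proof. by apply/rowP => i; rewrite !mxE; ring. Qed.
Lemma sym2C23 (a b c : 'rV[F]_n) : sym2 a b c = sym2 a c b.
Proof. by apply/rowP => i; rewrite !mxE; ring. Qed.

Lemma sym2xxx (a : 'rV[F]_n) : sym2 a a a = 0.
Proof.
apply/rowP => i; rewrite !mxE.
have -> : a 0 i * a 0 i + a 0 i * a 0 i + a 0 i * a 0 i = 3%:R * (a 0 i * a 0 i) by ring.
by rewrite char3 mul0r.
Qed.

Lemma sym2xxz (x z : 'rV[F]_n) : #|supp x| = #|supp z| -> sym2 x x z = 0 -> x = z.
Proof.
move=> hc /rowP h0.
have hi i : x 0 i * (x 0 i - z 0 i) = 0.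
  have := h0 i; rewrite !mxE => e.
  have -> : x 0 i * (x 0 i - z 0 i) =
    (x 0 i * x 0 i + x 0 i * z 0 i + z 0 i * x 0 i) - 3%:R * (x 0 i * z 0 i) by ring.
  by rewrite e char3 mul0r subr0.
have hxz i : x 0 i != 0 -> x 0 i = z 0 i.
  move=> nz; move/eqP: (hi i); rewrite mulf_eq0 (negbTE nz) /= subr_eq0 => /eqP //.
have sub : supp x \subset supp z.
  by apply/subsetP => i; rewrite !inE => nz; rewrite -(hxz _ nz).
have eqs : supp x = supp z by apply/eqP; rewrite eqEcard sub hc leqnn.
apply/rowP => i; case: (eqVneq (x 0 i) 0) => [e|nz]; last exact: hxz.
have : i \notin supp x by rewrite inE e eqxx.
by rewrite eqs inE negbK e => /eqP ->.
Qed.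

End Comb.

Lemma dist_nz (F : finFieldType) n (S : seq 'rV[F]_n) :
  (forall i j l : nat, (i < j)%N -> (j < l)%N -> (l < size S)%N ->
     sym2 (nth 0 S i) (nth 0 S j) (nth 0 S l) != 0) ->
  forall i j l, i != j -> j != l -> i != l -> (i < size S)%N -> (j < size S)%N -> (l < size S)%N ->
    sym2 (nth 0 S i) (nth 0 S j) (nth 0 S l) != 0.
Proof.
move=> H.
have step : forall i j l, (i < j)%N -> j != l -> i != l -> (i < size S)%N -> (j < size S)%N -> (l < size S)%N ->
    sym2 (nth 0 S i) (nth 0 S j) (nth 0 S l) != 0.
  move=> i j l ij jl il hi hj hl.
  case: (ltngtP j l) => [jl'|lj|e]; last by rewrite e eqxx in jl.
    exact: H.
  case: (ltngtP i l) => [il'|li|e]; last by rewrite e eqxx in il.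
    by rewrite sym2C23; apply: H.
  by rewrite sym2C23 sym2C12; apply: H.
move=> i j l ij jl il hi hj hl.
case: (ltngtP i j) => [ij'|ji|e]; last by rewrite e eqxx in ij.
  exact: step.
by rewrite sym2C12; apply: step => //; rewrite eq_sym.
Qed.

Lemma count_le2 (F : finFieldType) n (S : seq 'rV[F]_n) :
  (3%:R : F) = 0 ->
  (forall i j l : nat, (i < j)%N -> (j < l)%N -> (l < size S)%N ->
     sym2 (nth 0 S i) (nth 0 S j) (nth 0 S l) != 0) ->
  forall x, (count_mem x S <= 2)%N.
Proof.
move=> c3 H x; rewrite leqNgt; apply/negP => h3.
pose L := [seq i <- iota 0 (size S) | nth 0 S i == x].
have sL : size L = count_mem x S.
  rewrite size_filter -[in RHS](mkseq_nth 0 S) /mkseq count_map.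
  by apply: eq_count => i.
have srt : sorted ltn L := sorted_filter ltn_trans _ (iota_ltn_sorted 0 (size S)).
have inL t : (t < size L)%N -> ((nth 0%N L t) < size S)%N && (nth 0 S (nth 0%N L t) == x).
  move=> ht; have := mem_nth 0%N ht; rewrite mem_filter mem_iota add0n => /andP [e /andP [_ hl]].
  by rewrite hl e.
have lt t u : (t < u)%N -> (u < size L)%N -> ((nth 0%N L t) < (nth 0%N L u))%N.
  move=> tu hu; apply: (sorted_ltn_nth ltn_trans 0%N srt) => //.
  by rewrite inE; apply: ltn_trans hu.
have h2 : (2 < size L)%N by rewrite sL.
have h0 : (0 < size L)%N by rewrite sL; lia.
have h1 : (1 < size L)%N by rewrite sL; lia.
have /andP [_ /eqP e0] := inL 0%N h0.
have /andP [_ /eqP e1] := inL 1%N h1.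
have /andP [h2S /eqP e2] := inL 2%N h2.
have := H _ _ _ (lt 0%N 1%N isT h1) (lt 1%N 2%N isT h2) h2S.
by rewrite e0 e1 e2 sym2xxx // eqxx.
Qed.

Lemma Pfun_nz (F : finFieldType) n k (x y z : 'rV[F]_n) :
  (0 < k)%N -> #|F| = (3 ^ k)%N ->
  (@Pfun F n (3 ^ k)%N x y z != 0) = (sym2 x y z == 0).
Proof.
move=> k0 cF.
have fact (a : F) : (1 - a ^+ (3 ^ k - 1)%N != 0) = (a == 0).
  case: (eqVneq a 0) => [->|nz].
    rewrite expr0n; have -> : (3 ^ k - 1 == 0)%N = false.
      by apply/negbTE; rewrite -lt0n subn_gt0 -{1}(expn0 3) ltn_exp2l.
    by rewrite subr0 oner_eq0.
  have ha : a ^+ (3 ^ k - 1)%N = 1.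
    apply: (mulfI nz); rewrite mulr1 -exprS subn1 prednK ?expn_gt0 //.
    by rewrite -cF expf_card.
  by rewrite ha subrr eqxx.
rewrite /Pfun; apply/idP/idP.
  move/prodf_neq0 => H; apply/eqP/rowP => i; have := H i isT; rewrite fact !mxE.
  by move/eqP.
move/eqP/rowP => H; apply/prodf_neq0 => i _; rewrite fact; have := H i; rewrite !mxE => ->.
by rewrite eqxx.
Qed.

Set Implicit Arguments.
Unset Implicit Arguments.
Set Strict Implicit.
Theorem corollary4p10 (k n : nat) (F : finFieldType) (S : seq 'rV[F]_n) :
  (0 < k)%N -> (0 < n)%N -> #|F| = (3 ^ k)%N ->
  (forall i j l : nat, (i < j)%N -> (j < l)%N -> (l < size S)%N ->
     sym2 (nth 0 S i) (nth 0 S j) (nth 0 S l) != 0) ->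
  (size S <= 2 * (n + 1) * srk (@Pfun F n (3 ^ k)%N))%N.
Proof.
move=> k0 n0 cF HS.
have c3 : (3%:R : F) = 0 by apply: pcharf0; apply: (card_finPcharP cF).
rewrite /srk; case: ex_minnP => r /asboolP hr _.
pose D := [set x | x \in S].
pose Dw (w : 'I_n.+1) := [set x in D | #|supp x| == w].
have Hd : forall x y z, x \in S -> y \in S -> z \in S -> x != y -> y != z -> x != z ->
    sym2 x y z != 0.
  move=> x y z xS yS zS nxy nyz nxz.
  rewrite -(nth_index 0 xS) -(nth_index 0 yS) -(nth_index 0 zS).
  apply: dist_nz; rewrite ?index_mem //.
  - by apply: contra nxy => /eqP e; rewrite -(nth_index 0 xS) e nth_index.
  - by apply: contra nyz => /eqP e; rewrite -(nth_index 0 yS) e nth_index.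
  - by apply: contra nxz => /eqP e; rewrite -(nth_index 0 xS) e nth_index.
have hw w : (#|Dw w| <= r)%N.
  apply: (@key _ _ _ (Dw w) r hr) => x y z; rewrite !inE => /andP[xS /eqP wx] /andP[yS /eqP wy] /andP[zS /eqP wz].
  rewrite Pfun_nz //.
  case: (eqVneq x y) => [exy|nxy]; case: (eqVneq y z) => [eyz|nyz] /=.
  - by rewrite exy eyz (sym2xxx c3) eqxx.
  - apply/negbTE/eqP => h0; rewrite exy in h0.
    by move: nyz; rewrite (@sym2xxz _ _ c3 _ _ (etrans wy (esym wz)) h0) eqxx.
  - apply/negbTE/eqP => h0; rewrite eyz sym2C12 sym2C23 in h0.
    by move: nxy; rewrite eyz (@sym2xxz _ _ c3 _ _ (etrans wz (esym wx)) h0) eqxx.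
  - case: (eqVneq x z) => [exz|nxz].
      apply/negbTE/eqP => h0; rewrite exz sym2C23 in h0.
      by move: nyz; rewrite (@sym2xxz _ _ c3 _ _ (etrans wz (esym wy)) h0) eqxx.
    by apply/negbTE; apply: Hd.
have hD : #|D| = (\sum_(w < n.+1) #|Dw w|)%N.
  rewrite -sum1_card.
  transitivity (\sum_(x in D) \sum_(w < n.+1) (#|supp x| == w : nat))%N.
    apply: eq_bigr => x _.
    have hx : (#|supp x| < n.+1)%N by rewrite ltnS -[X in (_ <= X)%N]card_ord max_card.
    rewrite (bigD1 (Ordinal hx)) //= eqxx big1 // => w hw1.
    by case: eqP => // e; move: hw1; rewrite -val_eqE /= e eqxx.
  rewrite exchange_big; apply: eq_bigr => w _.
  rewrite -sum1_card (@eq_bigl _ _ _ _ _ (fun x => x \in Dw w) (fun x => (x \in D) && (#|supp x| == w))); last first.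
    by move=> x; rewrite inE.
  rewrite big_mkcondr /=; apply: eq_bigr => x _; by case: (_ == _).
have hS : size S = (\sum_(x in D) count_mem x S)%N.
  transitivity (\sum_(y <- S) \sum_(x in D) (y == x : nat))%N.
    rewrite -sum1_size big_seq_cond [RHS]big_seq_cond; apply: eq_bigr => y /andP[yS _].
    rewrite (bigD1 y) ?inE //= eqxx big1 ?addn0 // => x /andP[_ ne].
    by rewrite eq_sym (negbTE ne).
  rewrite exchange_big; apply: eq_bigr => x _; rewrite -sum1_count [RHS]big_mkcond.
  by apply: eq_bigr => y _ /=; case: (y == x).
have h1 : (size S <= 2 * #|D|)%N.
  rewrite hS mulnC -sum_nat_const; apply: leq_sum => x _; exact: count_le2.
have h2 : (#|D| <= n.+1 * r)%N.
  rewrite hD; apply: (@leq_trans (\sum_(w < n.+1) r)%N); first by apply: leq_sum => w _; exact: hw.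
  by rewrite sum_nat_const card_ord.
apply: (leq_trans h1); rewrite addn1 -mulnA leq_mul2l h2 orbT //.
Qed.
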